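(* Let $P$ be an infinite field and $W(X)$ the free associative (unital) algebra over $P$ on a finite set $X=\{x_1,\ldots,x_n\}$. Let $\mu:W(X)\to W(X)$ be a bijection generating an automorphism $\tau$ of the semigroup $\mathrm{End}(W(X))$ (i.e. $\tau(s)=\mu s\mu^{-1}$ for all $s$), such that $\mu(a)=a$ for all $a\in P$ and $\mu(x_i)=x_i$ for all $i$. Then either $\mu(uv)=\mu(u)\mu(v)$ for all $u,v\in W(X)$, or $\mu(uv)=\mu(v)\mu(u)$ for all $u,v\in W(X)$.
   Context: $\mathrm{End}(W(X))$ is the semigroup of all $P$-algebra endomorphisms of $W(X)$. *)

(* Defs.v *)
From HB Require Import structures.
From mathcomp Require Import all_boot all_order all_algebra.
From mathcomp Require Import monalg.
Set Implicit Arguments.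
Unset Strict Implicit.
Unset Printing Implicit Defensive.
Import GRing.Theory.
Local Open Scope ring_scope.

(* W(X): the free associative unital P-algebra on X = {x_0,...,x_(n-1)},
   i.e. the monoid algebra of the free monoid on 'I_n. *)
Definition W (P : fieldType) (n : nat) := {malg P[{fmonom 'I_n}]}.

Definition gen (P : fieldType) (n : nat) (i : 'I_n) : W P n :=
  mkmalgU (fmu i) 1.

Definition is_alg_endo (P : fieldType) (n : nat) (s : W P n -> W P n) : Prop :=
  [/\ forall (a : P) (u v : W P n), s (a *: u + v) = a *: s u + s v,
      forall u v : W P n, s (u * v) = s u * s v
    & s 1 = 1].

Definition infinite_type (T : eqType) : Prop := forall s : seq T, exists x, x \notin s.

(* Main.v *)
Require Import Defs.
From HB Require Import structures.
From mathcomp Require Import all_boot all_order all_algebra.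
From mathcomp Require Import finmap monalg.
Set Implicit Arguments.
Unset Strict Implicit.
Unset Printing Implicit Defensive.
Import GRing.Theory.
Local Open Scope ring_scope.

Lemma shape2 (K : choiceType) (R : ringType) (g : {malg R[K]}) (k1 k2 : K) :
  k1 != k2 -> (forall k, g@_k != 0 -> k = k1 \/ k = k2) ->
  g = g@_k1 *: << k1 >> + g@_k2 *: << k2 >>.
Proof.
move=> ne hs; apply/malgP => k; rewrite mcoeffD !mcoeffZ !mcoeffU.
case: (eqVneq k k1) => [->|h1].
  by rewrite eq_sym (negbTE ne) mulr1 mulr0 addr0.
case: (eqVneq k k2) => [->|h2].
  by rewrite mulr1 mulr0 add0r.
rewrite !mulr0 addr0.
apply/eqP; apply/negP => /negP nz; case: (hs _ nz) => e.
  by move: h1; rewrite e eqxx.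
by move: h2; rewrite e eqxx.
Qed.


Lemma inalg_inj_gen (K : monomType) (R : ringType) (c d : R) :
  (c%:A : {malg R[K]}) = d%:A -> c = d.
Proof.
move=> /(congr1 (mcoeff mone)); rewrite mcoeffZ mcoeffZ mcoeff1 eqxx.
by rewrite !mulr1.
Qed.

Section Gen.
Variables (K : monomType) (R : comRingType).
Local Notation MA := {malg R[K]}.

Lemma malgU_scale_g (c : R) (k : K) : << c *g k >> = c *: (<< k >> : MA).
Proof.
apply/malgP => k'; rewrite mcoeffZ !mcoeffU.
by case: eqP => _; rewrite ?mulr1 ?mulr0.
Qed.

Lemma algr_g (c : R) (x : MA) : x * c%:A = c *: x.
Proof.
rewrite -mpolyC1E -malgU_scale_g malgM_def fgmulgU malgZ_def /fgscale.
by apply: eq_bigr => k _; rewrite mulm1 mulrC.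
Qed.

Lemma scaleAr_g (c : R) (x y : MA) : x * (c *: y) = c *: (x * y).
Proof. by rewrite -mulr_algl mulrA algr_g scalerAl. Qed.

Lemma prod_scale_g (I : Type) (d : I -> R) (f : I -> MA) (k : seq I) :
  \prod_(i <- k) (d i *: f i) = (\prod_(i <- k) d i) *: \prod_(i <- k) f i.
Proof.
elim: k => [|i k IH]; first by rewrite !big_nil scale1r.
by rewrite !big_cons IH -scalerAl scaleAr_g scalerA.
Qed.
End Gen.

Section Gen2.
Variables (K : monomType) (R : comRingType).
Local Notation MA := {malg R[K]}.

Lemma malgUM_g (k1 k2 : K) : (<< k1 >> : MA) * << k2 >> = << mmul k1 k2 >>.
Proof. by rewrite malgM_def fgmulUU mulr1. Qed.

Lemma scale_cancel_g (k : K) (c : R) : c *: (<< k >> : MA) = << k >> -> c = 1.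
Proof. by move/(congr1 (mcoeff k)); rewrite mcoeffZ !mcoeffUU mulr1. Qed.

Lemma alpha_sq_g (k0 k1 : K) (al be : R) :
  (mmul k0 (mmul k1 k0) == mmul k0 (mmul k0 k1)) = false ->
  (mmul k1 (mmul k0 k0) == mmul k0 (mmul k0 k1)) = false ->
  let X0 : MA := << k0 >> in let X1 : MA := << k1 >> in
  let M := al *: (X0 * X1) + be *: (X1 * X0) in
  al *: (X0 * X0 * X1) + be *: (X1 * (X0 * X0)) = al *: (X0 * M) + be *: (M * X0) ->
  al * al = al.
Proof.
move=> h1 h2 X0 X1 M /(congr1 (mcoeff (mmul k0 (mmul k0 k1)))).
rewrite /M /X0 /X1 mulrDr mulrDl !scaleAr_g -!scalerAl !malgUM_g.
rewrite -!mulmA !mcoeffD !mcoeffZ !mcoeffD !mcoeffZ !mcoeffU1 eqxx h1 h2.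
rewrite !mulr1 !mulr0 !addr0 mulr0 addr0 => e; by rewrite -e.
Qed.

Lemma alpha_sq_g2 (mu : MA -> MA) (k0 k1 : K) (al be : R) :
  (mmul k0 (mmul k1 k0) == mmul k0 (mmul k0 k1)) = false ->
  (mmul k1 (mmul k0 k0) == mmul k0 (mmul k0 k1)) = false ->
  mu << k0 >> = << k0 >> -> mu << k1 >> = << k1 >> ->
  mu (<< k0 >> * << k0 >>) = << k0 >> * << k0 >> ->
  mu (<< k0 >> * << k1 >>) = al *: (<< k0 >> * << k1 >>) + be *: (<< k1 >> * << k0 >>) ->
  (forall u v, mu (u * v) = al *: (mu u * mu v) + be *: (mu v * mu u)) ->
  al * al = al.
Proof.
move=> h1 h2 m0 m1 m00 m01 hM.
apply: (alpha_sq_g (be := be) h1 h2) => /=.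
have := congr1 mu (mulrA (<< k0 >> : MA) << k0 >> << k1 >>).
rewrite (hM << k0 >> (<< k0 >> * << k1 >>)) (hM (<< k0 >> * << k0 >>) << k1 >>).
by rewrite m00 m1 m01 m0 => ->.
Qed.
End Gen2.

Section Basics.
Variables (P : fieldType) (n : nat).
Local Notation W := (W P n).
Local Notation M := (fmonom 'I_n).

Lemma malgU_scale (c : P) (k : M) : << c *g k >> = c *: (<< k >> : W).
Proof. exact: malgU_scale_g. Qed.

Lemma genE i : gen P i = << fmu i >> :> W.
Proof. by []. Qed.

Lemma W1E : (1 : W) = << mone >>.
Proof. by rewrite -mpolyC1E. Qed.

Lemma malgUM (k1 k2 : M) : (<< k1 >> : W) * << k2 >> = << mmul k1 k2 >>.
Proof. by rewrite malgM_def fgmulUU mulr1. Qed.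

Lemma monomE (k : M) : (<< k >> : W) = \prod_(i <- k) gen P i.
Proof.
case: k => s; elim: s => [|i s IH].
  rewrite big_nil W1E; congr (<< _ >>); apply/eqP; by rewrite fmP /= fm1.
rewrite big_cons -IH /gen malgUM; congr (<< _ >>); apply/eqP.
by rewrite fmP /= fmM fmU.
Qed.

Lemma algW_r (c : P) (x : W) : x * c%:A = c *: x.
Proof. exact: algr_g. Qed.

Lemma algW_comm (c : P) (x : W) : GRing.comm (c%:A) x.
Proof. by rewrite /GRing.comm algW_r mulr_algl. Qed.

Lemma scaleWAr (c : P) (x y : W) : x * (c *: y) = c *: (x * y).
Proof. exact: scaleAr_g. Qed.

Lemma inalgW_inj (c d : P) : (c%:A : W) = d%:A -> c = d.
Proof. exact: inalg_inj_gen. Qed.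

End Basics.

Definition hw (n : nat) (R : ringType) (w : 'I_n -> R) (k : fmonom 'I_n) : R :=
  \prod_(i <- k) w i.

Lemma hw_mult (n : nat) (R : ringType) (w : 'I_n -> R) : mmorphism (hw w).
Proof.
split; last by rewrite /hw fm1 big_nil.
by move=> k1 k2; rewrite /hw fmM big_cat.
Qed.

HB.instance Definition _ (n : nat) (R : ringType) (w : 'I_n -> R) :=
  isMultiplicative.Build _ _ (hw w) (hw_mult w).

Section Subst.
Variables (P : fieldType) (n : nat).
Local Notation W := (W P n).

Definition is_morph (R : lalgType P) (F : W -> R) : Prop :=
  [/\ forall (a : P) (u v : W), F (a *: u + v) = a *: F u + F v,
      forall u v : W, F (u * v) = F u * F v
    & F 1 = 1].

Definition subst (R : lalgType P) (w : 'I_n -> R) (u : W) : R :=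
  mmap (in_alg R) (hw w) u.

Lemma subst_morph (R : lalgType P) (w : 'I_n -> R) :
  (forall (c : P) (x : R), GRing.comm (c%:A) x) -> is_morph (subst w).
Proof.
move=> hc; split.
- move=> a u v; rewrite /subst mmapD mmapZ /= mulr_algl //.
- move=> u v; rewrite /subst.
  have hm := commr_mmap_is_multiplicative (f := in_alg R) (h := hw w) (fun g m m' => hc _ _).
  by rewrite hm.1.
- by rewrite /subst mmap1.
Qed.

Lemma subst_gen (R : lalgType P) (w : 'I_n -> R) i : subst w (gen P i) = w i.
Proof.
by rewrite /subst /gen mmapU /= /hw fmU big_seq1 scale1r mul1r.
Qed.

Section MorphProps.
Variables (R : lalgType P) (F : W -> R).
Hypothesis hF : is_morph F.

Lemma morph0 : F 0 = 0.
Proof.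
case: hF => hl _ _; have := hl 1 0 0; rewrite !scale1r addr0.
by move/(congr1 (fun x => x - F 0)); rewrite addrK subrr => <-.
Qed.

Lemma morphD u v : F (u + v) = F u + F v.
Proof. by case: hF => hl _ _; have := hl 1 u v; rewrite !scale1r. Qed.

Lemma morphZ a u : F (a *: u) = a *: F u.
Proof. by case: hF => hl _ _; rewrite -[_ *: u]addr0 hl morph0 addr0. Qed.

Lemma morphM u v : F (u * v) = F u * F v.
Proof. by case: hF. Qed.

Lemma morph1 : F 1 = 1.
Proof. by case: hF. Qed.

Lemma morph_sum (I : Type) (r : seq I) (G : I -> W) :
  F (\sum_(i <- r) G i) = \sum_(i <- r) F (G i).
Proof. by apply: big_morph; [apply: morphD | apply: morph0]. Qed.

Lemma morph_prod (I : Type) (r : seq I) (G : I -> W) :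
  F (\prod_(i <- r) G i) = \prod_(i <- r) F (G i).
Proof. by apply: big_morph; [apply: morphM | apply: morph1]. Qed.

Lemma morph_expand (u : W) :
  F u = \sum_(k <- msupp u) (u@_k) *: \prod_(i <- k) F (gen P i).
Proof.
rewrite {1}[u]monalgE morph_sum; apply: eq_bigr => k _.
by rewrite malgU_scale morphZ monomE morph_prod.
Qed.
End MorphProps.

Lemma morph_unique (R : lalgType P) (F G : W -> R) :
  is_morph F -> is_morph G -> (forall i, F (gen P i) = G (gen P i)) -> F =1 G.
Proof.
move=> hF hG he u; rewrite (morph_expand hF) (morph_expand hG).
by apply: eq_bigr => k _; congr (_ *: _); apply: eq_bigr => i _.
Qed.

Lemma substW_morph (w : 'I_n -> W) : is_morph (subst w).
Proof. exact/subst_morph/algW_comm. Qed.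

Lemma substW_ext (w1 w2 : 'I_n -> W) : w1 =1 w2 -> subst w1 =1 subst w2.
Proof.
by move=> e; apply: morph_unique; try exact: substW_morph; move=> i; rewrite !subst_gen.
Qed.

End Subst.

Lemma uniq_seq_of_size (T : eqType) : infinite_type T ->
  forall N, exists s : seq T, uniq s /\ size s = N.
Proof.
move=> inf; elim=> [|N [s [us ss]]]; first by exists [::].
have [x xs] := inf s; exists (x :: s); by rewrite /= xs us ss.
Qed.

Lemma poly_zero_inf (P : fieldType) (p : {poly P}) : infinite_type P ->
  (forall a, p.[a] = 0) -> p = 0.
Proof.
move=> inf h; apply/eqP; apply/negPn/negP => nz.
have [s [us ss]] := uniq_seq_of_size inf (size p).
have : all (root p) s by apply/allP => x _; rewrite /root h.
move/(max_poly_roots nz)/(_ us); by rewrite ss ltnn.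
Qed.

Section Key.
Variables (P : fieldType) (n : nat) (mu : W P n -> W P n).
Local Notation W := (W P n).
Hypothesis H3 : forall s, is_alg_endo s -> exists t, is_alg_endo t /\ mu \o s =1 t \o mu.
Hypothesis Hc : forall a : P, mu (a%:A) = a%:A.
Hypothesis Hg : forall i, mu (gen P i) = gen P i.
Hypothesis inf : infinite_type P.

Lemma keyK (w : 'I_n -> W) u : mu (subst w u) = subst (mu \o w) (mu u).
Proof.
have [t [ht e]] := H3 (substW_morph w).
have ht' : is_morph t := ht.
have E : t =1 subst (mu \o w).
  apply: morph_unique ht' (substW_morph _) _ => i.
  by have := e (gen P i); rewrite /= !subst_gen Hg => <-.
by have := e u; rewrite /= E.
Qed.

Lemma mu0 : mu 0 = 0.
Proof. by have := Hc 0; rewrite scale0r. Qed.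

Section Uni.
Variable j : 'I_n.
Definition wpi (i : 'I_n) : W := if i == j then gen P j else 0.
Definition wev (a : P) (i : 'I_n) : W := if i == j then a%:A else 0.
Definition wphi (i : 'I_n) : {poly P} := if i == j then 'X else 0.
Definition phi := subst wphi.

Lemma phi_morph : is_morph phi.
Proof. by apply: subst_morph => c x; apply: comm_alg. Qed.

Lemma cfu : commr_rmorph (in_alg W) (gen P j).
Proof. by move=> a; rewrite /GRing.comm /= algW_r mulr_algl. Qed.

Definition psi := horner_morph cfu.

Lemma psi_phi u : psi (phi u) = subst wpi u.
Proof.
have hm : is_morph (psi \o phi).
  rewrite /psi; split.
  - move=> a x y /=; rewrite (morphD phi_morph) (morphZ phi_morph).
    by rewrite rmorphD -mul_polyC rmorphM /= horner_morphC /= mulr_algl.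
  - by move=> x y /=; rewrite (morphM phi_morph) rmorphM.
  - by rewrite /= (morph1 phi_morph) rmorph1.
apply: (morph_unique hm (substW_morph _)) => i /=.
rewrite /phi !subst_gen /wphi /wpi; case: eqP => _.
  by rewrite /psi horner_morphX.
by rewrite /psi (rmorph0 (horner_morph cfu)).
Qed.

Lemma ev_phi a u : subst (wev a) u = ((phi u).[a])%:A.
Proof.
have hm : is_morph (fun x => ((phi x).[a])%:A : W).
  split.
  - move=> b x y /=; rewrite (morphD phi_morph) (morphZ phi_morph).
    by rewrite hornerD hornerZ scalerDl scalerA.
  - by move=> x y /=; rewrite (morphM phi_morph) hornerM -scalerA mulr_algl.
  - by rewrite /= (morph1 phi_morph) hornerC scale1r.
apply: (morph_unique (substW_morph _) hm) => i /=.
rewrite /phi !subst_gen /wphi /wev; case: eqP => _.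
  by rewrite hornerX.
by rewrite horner0 scale0r.
Qed.

Lemma univariate u : subst wpi u = u -> mu u = u.
Proof.
move=> hu.
have e1 : subst wpi (mu u) = mu u.
  rewrite -{2}hu keyK; apply: substW_ext => i /=.
  by rewrite /wpi; case: eqP => _; rewrite ?Hg ?mu0.
have e2 : forall a, (phi (mu u)).[a] = (phi u).[a].
  move=> a; apply: (@inalgW_inj P n).
  apply: (etrans (esym (ev_phi a (mu u)))); apply: (etrans _ (ev_phi a u)).
  have := keyK (wev a) u; rewrite [subst (wev a) u]ev_phi Hc -ev_phi => ->.
  apply: substW_ext => i /=.
  by rewrite /wev; case: eqP => _; rewrite ?Hc ?mu0.
have e3 : phi (mu u) = phi u.
  apply/eqP; rewrite -subr_eq0; apply/eqP; apply: poly_zero_inf inf _ => a.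
  by rewrite hornerD hornerN e2 subrr.
by rewrite -e1 -psi_phi e3 psi_phi hu.
Qed.
End Uni.

End Key.

Lemma exp_id_all (P : fieldType) (c : nat) : infinite_type P ->
  (forall a : P, a ^+ c = a) -> c = 1%N.
Proof.
move=> inf h.
have : 'X^c - 'X = 0 :> {poly P}.
  by apply: poly_zero_inf inf _ => a; rewrite hornerD hornerN hornerXn hornerX h subrr.
move/eqP; rewrite subr_eq0 => /eqP hX.
by have := congr1 (fun p : {poly P} => size p) hX; rewrite /= size_polyXn size_polyX => -[].
Qed.

Section Diag.
Variables (P : fieldType) (n : nat).
Local Notation W := (W P n).

Lemma prod_scale_gen (d : 'I_n -> P) (k : seq 'I_n) :
  \prod_(i <- k) (d i *: gen P i) = (\prod_(i <- k) d i) *: \prod_(i <- k) gen P i :> W.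
Proof.
exact: prod_scale_g.
Qed.

Lemma mcoeff_sumW (I : Type) (r : seq I) (F : I -> W) k :
  (\sum_(i <- r) F i)@_k = \sum_(i <- r) (F i)@_k.
Proof.
elim: r => [|i r IH]; first by rewrite !big_nil mcoeff0.
by rewrite !big_cons mcoeffD IH.
Qed.

Lemma diag_coef (d : 'I_n -> P) (u : W) k :
  (subst (fun i => d i *: gen P i) u)@_k = (\prod_(i <- k) d i) * u@_k.
Proof.
rewrite {1}[u]monalgE /subst.
rewrite (raddf_sum (mmap (in_alg W) (hw (fun i => d i *: gen P i)))).
apply: (etrans (mcoeff_sumW _ _ _)).
have -> : u@_k = (\sum_(k' <- msupp u) << u@_k' *g k' >>)@_k by rewrite {1}[u]monalgE.
rewrite mcoeff_sumW mulr_sumr; apply: eq_bigr => k' _.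
have hU := @mmapU _ _ _ (in_alg W) (hw (fun i => d i *: gen P i)) (u@_k') k'.
apply: (etrans (congr1 (mcoeff k) hU)).
rewrite /hw prod_scale_gen -monomE /= mulr_algl scalerA.
rewrite mcoeffZ mcoeffU1 mcoeffU.
by case: eqP => [->|_]; rewrite ?mulr1 ?mulr0 // mulrC.
Qed.
End Diag.

Opaque gen fgmul fgadd fgscale fgopp mkmalgU.

Definition sc (P : fieldType) (n : nat) (c : P) (u : W P n) : W P n := c *: u.

Lemma sc_morph (P : fieldType) (n : nat) (F : W P n -> W P n) :
  is_morph F -> forall c u, F (sc c u) = sc c (F u).
Proof. by move=> hF c u; rewrite /sc (morphZ hF). Qed.

Lemma scDl (P : fieldType) (n : nat) (a b : P) (u : W P n) :
  sc (a + b) u = sc a u + sc b u.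
Proof. exact: scalerDl. Qed.

Lemma sc1 (P : fieldType) (n : nat) (u : W P n) : sc 1 u = u.
Proof. exact: scale1r. Qed.

Lemma sc0 (P : fieldType) (n : nat) (u : W P n) : sc 0 u = 0.
Proof. exact: scale0r. Qed.

Lemma substD (P : fieldType) (n : nat) (w : 'I_n -> W P n) (u v : W P n) :
  subst w (u + v) = subst w u + subst w v.
Proof. exact: (morphD (substW_morph w)). Qed.

Lemma substM (P : fieldType) (n : nat) (w : 'I_n -> W P n) (u v : W P n) :
  subst w (u * v) = subst w u * subst w v.
Proof. exact: (morphM (substW_morph w)). Qed.

Lemma substSc (P : fieldType) (n : nat) (w : 'I_n -> W P n) c (u : W P n) :
  subst w (sc c u) = sc c (subst w u).
Proof. exact: (morphZ (substW_morph w)). Qed.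

Lemma substG (P : fieldType) (n : nat) (w : 'I_n -> W P n) i :
  subst w (gen P i) = w i.
Proof. exact: subst_gen. Qed.

Section Main.
Variables (P : fieldType) (n : nat) (mu : W P n -> W P n).
Local Notation W := (W P n).
Hypothesis H3 : forall s, is_alg_endo s -> exists t, is_alg_endo t /\ mu \o s =1 t \o mu.
Hypothesis Hc : forall a : P, mu (a%:A) = a%:A.
Hypothesis Hg : forall i, mu (gen P i) = gen P i.
Hypothesis inf : infinite_type P.

Lemma mu_scale_gen j (c : P) : mu (c *: gen P j) = c *: gen P j.
Proof.
apply: (univariate H3 Hc Hg inf (j := j)).
by rewrite (morphZ (substW_morph _)) subst_gen /wpi eqxx.
Qed.

Lemma mu_sq j : mu (gen P j * gen P j) = gen P j * gen P j.
Proof.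
apply: (univariate H3 Hc Hg inf (j := j)).
by rewrite (morphM (substW_morph _)) subst_gen /wpi eqxx.
Qed.

Lemma muZ (j : 'I_n) (c : P) (u : W) : mu (c *: u) = c *: mu u.
Proof.
pose w := fun i => if i == j then u else gen P i.
have e : subst w (c *: gen P j) = c *: u.
  by rewrite (morphZ (substW_morph _)) subst_gen /w eqxx.
rewrite -e (keyK H3 Hg) mu_scale_gen (morphZ (substW_morph _)) subst_gen /= /w eqxx //.
Qed.


Variables (i0 i1 : 'I_n).
Hypothesis hne : i0 != i1.

Let hne' : (i1 == i0) = false.
Proof. by rewrite eq_sym (negbTE hne). Qed.
Let hne0 : (i0 == i1) = false.
Proof. by rewrite (negbTE hne). Qed.

Definition x0 := gen P i0.
Definition x1 := gen P i1.
Definition m := mu (x0 * x1).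
Definition w2 (a b : W) (i : 'I_n) : W :=
  if i == i0 then a else if i == i1 then b else gen P i.

Lemma subst_w2_x01 a b : subst (w2 a b) (x0 * x1) = a * b.
Proof.
by rewrite (morphM (substW_morph _)) !subst_gen /w2 eqxx hne' eqxx.
Qed.

Lemma M1 u v : mu (u * v) = subst (w2 (mu u) (mu v)) m.
Proof.
rewrite -{1}(subst_w2_x01 u v) (keyK H3 Hg); apply: substW_ext => i /=.
by rewrite /w2; case: eqP => _ //; case: eqP => _ //; rewrite Hg.
Qed.

Definition Dab (a b : P) (i : 'I_n) : P :=
  if i == i0 then a else if i == i1 then b else 0.

Lemma homog a b : subst (fun i => Dab a b i *: gen P i) m = (a * b) *: m.
Proof.
have e : subst (fun i => Dab a b i *: gen P i) (x0 * x1) = (a * b) *: (x0 * x1).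
  rewrite (morphM (substW_morph _)) !subst_gen /Dab eqxx hne' eqxx.
  by rewrite -scalerAl scaleWAr scalerA.
rewrite /m -(muZ i0) -e (keyK H3 Hg); apply: substW_ext => i /=.
by rewrite (muZ i0) Hg.
Qed.

Lemma prodD (a b : P) (k : seq 'I_n) : \prod_(i <- k) Dab a b i =
  if all (fun i => (i == i0) || (i == i1)) k
  then a ^+ count_mem i0 k * b ^+ count_mem i1 k else 0.
Proof.
elim: k => [|i k IH]; first by rewrite big_nil /= !expr0 mulr1.
rewrite big_cons IH /= /Dab.
case: (eqVneq i i0) => [->|h0].
  rewrite hne0 /= add1n add0n; case: ifP => _; last by rewrite mulr0.
  by rewrite exprS mulrA.
case: (eqVneq i i1) => [_|h1].
  rewrite /= add1n add0n; case: ifP => _; last by rewrite mulr0.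
  by rewrite exprS mulrCA mulrA.
by rewrite /= mul0r.
Qed.

Lemma size_all01 (k : seq 'I_n) : all (fun i => (i == i0) || (i == i1)) k ->
  size k = (count_mem i0 k + count_mem i1 k)%N.
Proof.
elim: k => [|i k IH] //= /andP [/orP [] /eqP -> hk].
  by rewrite eqxx hne0 IH.
by rewrite eqxx hne' IH //= add0n add1n addnS.
Qed.

Lemma comb (k : seq 'I_n) :
  (forall a b : P, a * b = \prod_(i <- k) Dab a b i) ->
  k = [:: i0; i1] \/ k = [:: i1; i0].
Proof.
move=> h.
have hall : all (fun i => (i == i0) || (i == i1)) k.
  have := h 1 1; rewrite prodD; case: ifP => // _ /eqP.
  by rewrite mulr1 oner_eq0.
have c0 : count_mem i0 k = 1%N.
  apply: (exp_id_all inf) => a; have := h a 1.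
  by rewrite prodD hall expr1n !mulr1 => <-.
have c1 : count_mem i1 k = 1%N.
  apply: (exp_id_all inf) => b; have := h 1 b.
  by rewrite prodD hall expr1n !mul1r => <-.
have := size_all01 hall; rewrite c0 c1.
case: k h hall c0 c1 => [|x [|y [|z k]]] //= _ /and3P [hx hy _] c0 c1 _.
case/orP: hx => /eqP ?; case/orP: hy => /eqP ?; subst x y.
- by move: c0; rewrite eqxx.
- by left.
- by right.
- by move: c1; rewrite eqxx.
Qed.


Definition k01 := mmul (fmu i0) (fmu i1).
Definition k10 := mmul (fmu i1) (fmu i0).
Definition al := m@_k01.
Definition be := m@_k10.

Lemma x01E : x0 * x1 = << k01 >>.
Proof. by rewrite /x0 /x1 !genE malgUM. Qed.
Lemma x10E : x1 * x0 = << k10 >>.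
Proof. by rewrite /x0 /x1 !genE malgUM. Qed.

Lemma k01v : val k01 = [:: i0; i1].
Proof. by rewrite /k01 /= fmM !fmU. Qed.
Lemma k10v : val k10 = [:: i1; i0].
Proof. by rewrite /k10 /= fmM !fmU. Qed.

Lemma supp_m k : m@_k != 0 -> k = k01 \/ k = k10.
Proof.
move=> nz.
have h : forall a b : P, a * b = \prod_(i <- k) Dab a b i.
  move=> a b; have := congr1 (mcoeff k) (homog a b).
  rewrite diag_coef mcoeffZ => /eqP; rewrite eq_sym => /eqP.
  by move/(mulIf nz).
case: (comb h) => e; [left|right]; apply: val_inj.
  by rewrite k01v.
by rewrite k10v.
Qed.

Lemma k10_neq : (k10 == k01) = false.
Proof. by rewrite fmP k10v k01v eqseq_cons hne'. Qed.

Lemma m_shape : m = sc al (x0 * x1) + sc be (x1 * x0).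
Proof.
rewrite /sc x01E x10E /al /be; apply: shape2; last exact: supp_m.
by rewrite eq_sym k10_neq.
Qed.

Lemma shape_subst a b : subst (w2 a b) m = sc al (a * b) + sc be (b * a).
Proof.
rewrite {1}m_shape.
apply: (etrans (substD _ _ _)).
congr (_ + _).
  apply: (etrans (substSc _ _ _)); congr (sc _ _).
  apply: (etrans (substM _ _ _)).
  by rewrite !substG /w2 eqxx hne' eqxx.
apply: (etrans (substSc _ _ _)); congr (sc _ _).
apply: (etrans (substM _ _ _)).
by rewrite !substG /w2 eqxx hne' eqxx.
Qed.

Lemma muM u v : mu (u * v) = sc al (mu u * mu v) + sc be (mu v * mu u).
Proof. by rewrite M1 shape_subst. Qed.

Lemma alpha_beta : al + be = 1.
Proof.
have := muM x0 x0; rewrite /x0 (mu_sq i0) Hg -scDl !genE malgUM => e.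
apply: (@scale_cancel_g _ P (mmul (fmu i0) (fmu i0))); exact: (esym e).
Qed.

Lemma alpha_sq : al * al = al.
Proof.
have h1 : (mmul (fmu i0) (mmul (fmu i1) (fmu i0)) ==
           mmul (fmu i0) (mmul (fmu i0) (fmu i1))) = false.
  by rewrite fmP !fmM !fmU !cat1s eqseq_cons eqxx eqseq_cons hne'.
have h2 : (mmul (fmu i1) (mmul (fmu i0) (fmu i0)) ==
           mmul (fmu i0) (mmul (fmu i0) (fmu i1))) = false.
  by rewrite fmP !fmM !fmU !cat1s eqseq_cons hne'.
apply: (alpha_sq_g2 (mu := mu) (k0 := fmu i0) (k1 := fmu i1) (be := be) h1 h2).
- by have := Hg i0; rewrite genE.
- by have := Hg i1; rewrite genE.
- by have := mu_sq i0; rewrite genE.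
- by have := m_shape; rewrite /m /x0 /x1 !genE /sc.
- by move=> u v; have := muM u v; rewrite /sc.
Qed.

Lemma addW0 (u : W) : u + 0 = u. Proof. exact: addr0. Qed.
Lemma add0W (u : W) : 0 + u = u. Proof. exact: add0r. Qed.

Lemma main_two : (forall u v, mu (u * v) = mu u * mu v) \/
                 (forall u v, mu (u * v) = mu v * mu u).
Proof.
have ab := alpha_beta; have aa := alpha_sq.
have : al * (al - 1) = 0 by rewrite mulrBr mulr1 aa subrr.
move/eqP; rewrite mulf_eq0 subr_eq0 => /orP [/eqP a0|/eqP a1].
  have b1 : be = 1 by move: ab; rewrite a0 add0r.
  right => u v; rewrite muM a0 b1 sc0 sc1; exact: add0W.
have b0 : be = 0 by move: ab; rewrite a1 => /eqP; rewrite -subr_eq0 addrC addKr => /eqP.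
left => u v; rewrite muM a1 b0 sc0 sc1; exact: addW0.
Qed.

End Main.

Lemma all_const_g (K : monomType) (R : ringType) :
  (forall k : K, k = mone) -> forall g : {malg R[K]}, g = (g@_mone)%:A.
Proof.
move=> hk g; apply/malgP => k; rewrite (hk k) mcoeffZ mcoeff1 eqxx mulr1 //.
Qed.

Lemma fmonom0 (k : fmonom 'I_0) : k = mone.
Proof.
apply/eqP; rewrite fmP fm1; case: k => [[|i s]] //=; by case: i.
Qed.

Unset Implicit Arguments.

Theorem lemma4p2 (P : fieldType) (n : nat) (mu : W P n -> W P n) :
  infinite_type P ->
  bijective mu ->
  (* tau(s) = mu s mu^-1 maps End(W(X)) into End(W(X)) ... *)
  (forall s, is_alg_endo s -> exists t, is_alg_endo t /\ mu \o s =1 t \o mu) ->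
  (* ... and onto End(W(X)) *)
  (forall t, is_alg_endo t -> exists s, is_alg_endo s /\ mu \o s =1 t \o mu) ->
  (forall a : P, mu (a%:A) = a%:A) ->
  (forall i : 'I_n, mu (gen P i) = gen P i) ->
  (forall u v : W P n, mu (u * v) = mu u * mu v) \/
  (forall u v : W P n, mu (u * v) = mu v * mu u).
Proof.
move=> inf _ H3 _.
case: n mu H3 => [|[|n']] mu H3 Hc Hg.
- have idm : forall w, mu w = w.
    move=> w; have e := @all_const_g _ _ fmonom0 w.
    by rewrite [in LHS]e Hc -e.
  by left => u v; rewrite !idm.
- have idm : forall w, mu w = w.
    move=> w; apply: (univariate H3 Hc Hg inf (j := ord0)).
    have hid : is_morph (fun x : W P 1 => x) by split.
    apply: (morph_unique (substW_morph _) hid) => i.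
    by rewrite subst_gen /wpi (fintype.ord1 i) eqxx.
  by left => u v; rewrite !idm.
- apply: (main_two H3 Hc Hg inf (i0 := ord0) (i1 := Ordinal (isT : 1 < n'.+2)%N)).
  by [].
Qed.
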